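(* Let $\alpha,\alpha'\in(0,1)$ with $\alpha>\alpha'$, and let $\mathcal M_\alpha$ and $\mathcal M_{\alpha'}$ denote the sets of mechanisms that are undominated with respect to $\mathrm{RS}_\alpha$ and $\mathrm{RS}_{\alpha'}$ respectively. Then $\mathcal M_{\alpha'}\subseteq\mathcal M_\alpha$.
   Context: Setting. Let $\Theta=[\underline\theta,\overline\theta]$ with $0<\underline\theta<\overline\theta$. Let $c>0$ and let $P:\mathbb R_+\to\mathbb R_+$ be continuous and strictly decreasing with $P(\overline q)=0$ for some $\overline q>0$. Put $V(q)=\int_0^q P(z)\,dz$ and $\mathrm{TS}(\theta,q)=V(q)-c-\theta q$ for $q>0$, $\mathrm{TS}(\theta,0)=0$. Assume (A2): $\mathrm{TS}(\overline\theta,P^{-1}(\overline\theta))>0$. A mechanism is a triple $M=(r,q,u)$ of functions $r:\Theta\to[0,1]$, $q:\Theta\to[0,\overline q]$, $u:\Theta\to\mathbb R$ with $q(\theta)=0$ if and only if $r(\theta)=0$. It is IC if $u(\theta)\ge u(\theta')+(\theta'-\theta)q(\theta')r(\theta')$ for all $\theta,\theta'\in\Theta$, and IR if $u(\theta)\ge 0$ for all $\theta$. (Known fact: $M$ is IC iff $\theta\mapsto q(\theta)r(\theta)$ is nonincreasing and $u(\theta)=u(\overline\theta)+\int_\theta^{\overline\theta}q(z)r(z)\,dz$ for all $\theta$; an IC mechanism is IR iff $u(\overline\theta)\ge0$.) For a weight $\beta\in[0,1)$, the regulator's surplus at $\theta$ is $\mathrm{RS}_\beta(\theta,M)=r(\theta)\,\mathrm{TS}(\theta,q(\theta))-(1-\beta)u(\theta)$.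 An IC and IR mechanism $\tilde M$ dominates an IC and IR mechanism $M$ with respect to $\mathrm{RS}_\beta$ if $\mathrm{RS}_\beta(\theta,\tilde M)\ge \mathrm{RS}_\beta(\theta,M)$ for all $\theta\in\Theta$ with strict inequality for some $\theta$; $M$ is undominated (w.r.t. $\mathrm{RS}_\beta$) if it is IC, IR and not dominated in this sense by any IC and IR mechanism. *)

(* Defs.v *)
From Stdlib Require Import Reals.
From Coquelicot Require Import Coquelicot.
Open Scope R_scope.

Definition inTheta (thl thh th : R) : Prop := thl <= th <= thh.

Definition Vf (P : R -> R) (q : R) : R := RInt P 0 q.

Definition TS (P : R -> R) (c th q : R) : R :=
  if Rlt_dec 0 q then Vf P q - c - th * q else 0.

(* A mechanism is a triple (r, q, u) of functions on Theta
   (represented as functions R -> R; only values on Theta matter). *)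
Record mechanism := Mech { mr : R -> R; mq : R -> R; mu : R -> R }.

Definition is_mechanism (thl thh qbar : R) (M : mechanism) : Prop :=
  forall th, inTheta thl thh th ->
    (0 <= mr M th <= 1) /\ (0 <= mq M th <= qbar) /\
    (mq M th = 0 <-> mr M th = 0).

Definition IC (thl thh : R) (M : mechanism) : Prop :=
  forall th th', inTheta thl thh th -> inTheta thl thh th' ->
    mu M th >= mu M th' + (th' - th) * mq M th' * mr M th'.

Definition IR (thl thh : R) (M : mechanism) : Prop :=
  forall th, inTheta thl thh th -> mu M th >= 0.

Definition ICIR (thl thh qbar : R) (M : mechanism) : Prop :=
  is_mechanism thl thh qbar M /\ IC thl thh M /\ IR thl thh M.

Definition RS (P : R -> R) (c beta : R) (th : R) (M : mechanism) : R :=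
  mr M th * TS P c th (mq M th) - (1 - beta) * mu M th.

Definition dominates (thl thh qbar : R) (P : R -> R) (c beta : R)
  (Mt M : mechanism) : Prop :=
  ICIR thl thh qbar Mt /\ ICIR thl thh qbar M /\
  (forall th, inTheta thl thh th -> RS P c beta th Mt >= RS P c beta th M) /\
  (exists th, inTheta thl thh th /\ RS P c beta th Mt > RS P c beta th M).

Definition undominated (thl thh qbar : R) (P : R -> R) (c beta : R)
  (M : mechanism) : Prop :=
  ICIR thl thh qbar M /\
  ~ (exists Mt, dominates thl thh qbar P c beta Mt M).

(* Main.v *)
Require Import Defs.
From Stdlib Require Import Reals.
From Coquelicot Require Import Coquelicot.
From Stdlib Require Import Lra Classical.
Open Scope R_scope.

Lemma lip_cont (f : R -> R) (K : R) : 0 <= K ->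
  (forall x y, Rabs (f x - f y) <= K * Rabs (x - y)) ->
  forall x, continuity_pt f x.
Proof.
  intros HK H x. unfold continuity_pt, continue_in, limit1_in, limit_in.
  intros eps Heps. exists (eps / (K + 1)). split.
  { apply Rdiv_lt_0_compat; lra. }
  intros y [_ Hy]. simpl in *. unfold R_dist in *.
  eapply Rle_lt_trans. apply H.
  assert (Hy2 : Rabs (y - x) * (K + 1) < eps).
  { apply (Rmult_lt_compat_r (K+1)) in Hy; [|lra].
    unfold Rdiv in Hy. rewrite Rmult_assoc, Rinv_l in Hy; lra. }
  pose proof (Rabs_pos (y - x)). nra.
Qed.

Lemma clamp_lip (l h x y : R) : l <= h ->
  Rabs (Rmax l (Rmin h x) - Rmax l (Rmin h y)) <= Rabs (x - y).
Proof.
  intros Hlh. unfold Rmax, Rmin.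
  repeat destruct Rle_dec; unfold Rabs; repeat destruct Rcase_abs; lra.
Qed.

Lemma clamp_in (l h x : R) : l <= h -> inTheta l h (Rmax l (Rmin h x)).
Proof. intros. unfold inTheta, Rmax, Rmin. repeat destruct Rle_dec; lra. Qed.

Lemma clamp_id (l h x : R) : inTheta l h x -> Rmax l (Rmin h x) = x.
Proof. unfold inTheta. intros. unfold Rmax, Rmin. repeat destruct Rle_dec; lra. Qed.

Lemma u_lip thl thh qbar M : is_mechanism thl thh qbar M -> IC thl thh M ->
  forall x y, inTheta thl thh x -> inTheta thl thh y ->
  Rabs (mu M x - mu M y) <= qbar * Rabs (x - y).
Proof.
  intros Hm Hic x y Hx Hy.
  destruct (Hm x Hx) as [[r0 r1] [[q0 q1] _]].
  destruct (Hm y Hy) as [[s0 s1] [[p0 p1] _]].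
  pose proof (Hic x y Hx Hy). pose proof (Hic y x Hy Hx).
  assert (0 <= mq M x * mr M x <= qbar) by (split; nra).
  assert (0 <= mq M y * mr M y <= qbar) by (split; nra).
  unfold Rabs; repeat destruct Rcase_abs; nra.
Qed.

Theorem proposition1
  (thl thh c qbar : R) (P : R -> R)
  (Hth : 0 < thl < thh) (Hc : 0 < c) (Hqbar : 0 < qbar)
  (HPcont : forall z, 0 <= z -> continuous P z)
  (HPnn : forall z, 0 <= z -> 0 <= P z)
  (HPdec : forall z1 z2, 0 <= z1 -> z1 < z2 -> z2 <= qbar -> P z2 < P z1)
  (HPq : P qbar = 0)
  (HA2 : exists q0, 0 <= q0 <= qbar /\ P q0 = thh /\ TS P c thh q0 > 0)
  (alpha alpha' : R) (Ha : 0 < alpha < 1) (Ha' : 0 < alpha' < 1)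
  (Hlt : alpha' < alpha) :
  forall M : mechanism,
    undominated thl thh qbar P c alpha' M ->
    undominated thl thh qbar P c alpha M.
Proof.
  intros M [HM Hnd]. split; [exact HM|].
  intros [Mt [HMt [_ [Hge [th0 [Hth0 Hgt]]]]]]. apply Hnd.
  pose proof HM as HM0. pose proof HMt as HMt0.
  destruct HMt as [HmT [ICT IRT]], HM as [Hm [ICM IRM]].
  unfold RS in Hge, Hgt.
  destruct (classic (exists th, inTheta thl thh th /\ mu Mt th - mu M th > 0))
    as [[th1 [Hth1 Hpos]] | Hneg].
  - set (D := fun th => mu Mt th - mu M th).
    set (f := fun x => D (Rmax thl (Rmin thh x))).
    assert (Hfc : forall x, continuity_pt f x).
    { apply (lip_cont f (qbar + qbar)); [lra|]. intros x y. unfold f, D.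
      pose proof (clamp_lip thl thh x y ltac:(lra)).
      pose proof (clamp_in thl thh x ltac:(lra)).
      pose proof (clamp_in thl thh y ltac:(lra)).
      pose proof (u_lip _ _ _ _ Hm ICM _ _ H0 H1).
      pose proof (u_lip _ _ _ _ HmT ICT _ _ H0 H1).
      set (X := Rmax thl (Rmin thh x)) in *.
      set (Y := Rmax thl (Rmin thh y)) in *.
      pose proof (Rabs_triang (mu Mt X - mu Mt Y) (- (mu M X - mu M Y))).
      rewrite Rabs_Ropp in H4.
      replace (mu Mt X - mu M X - (mu Mt Y - mu M Y)) with
        (mu Mt X - mu Mt Y + - (mu M X - mu M Y)) by ring.
      nra. }
    destruct (continuity_ab_maj f thl thh ltac:(lra) (fun c _ => Hfc c))
      as [a0 [Hmax Ha0]].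
    set (a := a0) in *.
    assert (Hain : inTheta thl thh a) by exact Ha0.
    assert (HDmax : forall th, inTheta thl thh th -> D th <= D a).
    { intros th Hth'. pose proof (Hmax th Hth'). unfold f in H.
      rewrite !clamp_id in H; auto. }
    set (m := D a).
    assert (Hm0 : m > 0) by (pose proof (HDmax th1 Hth1) as HH; unfold m, D in *; cbv beta in *; lra).
    exists (Mech (fun th => if Rle_dec th a then mr Mt th else mr M th)
                 (fun th => if Rle_dec th a then mq Mt th else mq M th)
                 (fun th => if Rle_dec th a then mu Mt th - m else mu M th)).
    split; [|split; [exact HM0|split]].
    + split; [|split].
      * intros th Hth'. simpl. destruct Rle_dec; [apply HmT|apply Hm]; auto.
      * intros th th' H1 H2. simpl.
        destruct (Rle_dec th a) as [Ht|Ht]; destruct (Rle_dec th' a) as [Ht'|Ht'].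
        -- pose proof (ICT th th' H1 H2). lra.
        --
           pose proof (ICT th a H1 Hain). pose proof (ICM a th' Hain H2).
           pose proof (ICT th' a H2 Hain). pose proof (HDmax th' H2).
           unfold m, D in *.
           assert (HQ : 0 <= (th' - a) * (mq Mt a * mr Mt a - mq M th' * mr M th')) by lra.
           assert (HQ2 : 0 <= mq Mt a * mr Mt a - mq M th' * mr M th').
           { destruct (Rle_or_lt 0 (mq Mt a * mr Mt a - mq M th' * mr M th')); auto. nra. }
           assert (0 <= (a - th) * (mq Mt a * mr Mt a - mq M th' * mr M th'))
             by (apply Rmult_le_pos; lra).
           lra.
        --
           pose proof (ICT th th' H1 H2). pose proof (HDmax th H1).
           unfold m, D in *. lra.
        -- apply ICM; auto.
      * intros th Hth'. simpl. destruct Rle_dec.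
        -- pose proof (ICT th a Hth' Hain). pose proof (IRM a Hain).
           destruct (HmT a Hain) as [[r0 r1] [[q0 q1] _]].
           assert (0 <= (a - th) * mq Mt a * mr Mt a).
           { apply Rmult_le_pos; [apply Rmult_le_pos|]; lra. }
           unfold m, D in *. lra.
        -- apply IRM; auto.
    + intros th Hth'. unfold RS. simpl. pose proof (Hge th Hth').
      destruct Rle_dec.
      * pose proof (HDmax th Hth'). unfold m, D in *.
        destruct (Rle_or_lt 0 (mu Mt th - mu M th)).
        -- assert (0 <= (1 - alpha) * (mu Mt th - mu M th)) by (apply Rmult_le_pos; lra).
           assert (0 <= (1 - alpha') * (mu Mt a - mu M a - (mu Mt th - mu M th)))
             by (apply Rmult_le_pos; lra).
           lra.
        -- assert (0 <= (alpha - alpha') * (mu M th - mu Mt th)) by (apply Rmult_le_pos; lra).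
           assert (0 <= (1 - alpha') * (mu Mt a - mu M a)) by (apply Rmult_le_pos; lra).
           lra.
      * lra.
    + exists a. split; auto. unfold RS. simpl.
      destruct (Rle_dec a a); [|lra].
      pose proof (Hge a Hain). unfold m, D in *.
      assert (0 < (1 - alpha) * (mu Mt a - mu M a)) by (apply Rmult_lt_0_compat; lra).
      lra.
  - exists Mt. split; [exact HMt0|split; [exact HM0|split]].
    + intros th Hth'. unfold RS. pose proof (Hge th Hth').
      assert (mu Mt th - mu M th <= 0).
      { destruct (Rle_or_lt (mu Mt th - mu M th) 0); auto.
        exfalso; apply Hneg; exists th; split; auto; lra. }
      assert (0 <= (alpha - alpha') * (mu M th - mu Mt th)) by (apply Rmult_le_pos; lra).
      lra.
    + exists th0. split; auto. unfold RS.
      assert (mu Mt th0 - mu M th0 <= 0).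
      { destruct (Rle_or_lt (mu Mt th0 - mu M th0) 0); auto.
        exfalso; apply Hneg; exists th0; split; auto; lra. }
      assert (0 <= (alpha - alpha') * (mu M th0 - mu Mt th0)) by (apply Rmult_le_pos; lra).
      lra.
Qed.
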